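(* Let $\mathbb{T}=\mathbb{R}/\mathbb{Z}$ with Haar probability measure $\mu$, outer measure $\mu^*$ and inner measure $\mu_*$. There exist subsets $A,B\subset\mathbb{T}$ and a real number $\alpha>0$ such that $A+B$ is Haar measurable and satisfies $0<\mu(A+B)\leq\alpha\,\mu^*(A)$, and yet for all positive integers $m,n$ the set $mB-nB$ is Haar measurable and satisfies $\mu(mB-nB)>\alpha^{m+n}\mu_*(A)$.
   Context: $\mu^*(S)=\inf\{\mu(U):U\supset S\text{ measurable}\}$, $\mu_*(S)=\sup\{\mu(K):K\subset S,\ K\text{ compact}\}$. $mB-nB=\{b_1+\dots+b_m-b_1'-\dots-b_n':b_i,b_j'\in B\}$. *)

(* Defs.v *)
From HB Require Import structures.
From mathcomp Require Import all_boot all_order all_algebra.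
From mathcomp Require Import all_classical all_reals all_analysis.
Set Implicit Arguments. Unset Strict Implicit. Unset Printing Implicit Defensive.
Import Order.TTheory GRing.Theory Num.Theory.
Local Open Scope classical_set_scope.
Local Open Scope ring_scope.

(* The circle T = R/Z is modelled by 1-periodic subsets of R:
   a subset S of T corresponds to its preimage under R -> R/Z. *)
Section Torus.
Variable R : realType.

Definition tper (S : set R) : Prop := forall x : R, S (x + 1) <-> S x.

Definition Lmeas (S : set R) : Prop :=
  ((@wlength R idfun)^*)%mu.-cara.-measurable S.

Definition fund : set R := `[0%R, 1%R[%classic.

Definition haar_measurable (S : set R) : Prop := Lmeas (S `&` fund).
Definition haar (S : set R) : \bar R :=
  completed_lebesgue_measure (S `&` fund).

Definition haar_outer (S : set R) : \bar R :=
  ereal_inf [set haar U | U in [set U | tper U /\ haar_measurable U /\ S `<=` U]].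

(* inner measure: sup of mu(K) over compact K contained in S; compact
   subsets of T are exactly the images of closed 1-periodic subsets of R *)
Definition haar_inner (S : set R) : \bar R :=
  ereal_sup [set haar K | K in [set K | tper K /\ closed (K : set R^o) /\ K `<=` S]].

Definition sumset (A B : set R) : set R := [set a + b | a in A & b in B].
Definition negset (A : set R) : set R := [set - a | a in A].
Fixpoint msum (B : set R) (k : nat) : set R :=
  match k with
  | 0 => [set 0]
  | k'.+1 => sumset (msum B k') B
  end.
Definition diffset (B : set R) (m n : nat) : set R :=
  sumset (msum B m) (negset (msum B n)).

End Torus.

(* Main.v *)
Require Import Defs.
From HB Require Import structures.
From mathcomp Require Import all_boot all_order all_algebra.
From mathcomp Require Import all_classical all_reals all_analysis.
From mathcomp Require Import measurable_realfun.
From mathcomp Require Import ring lra.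
Import Order.TTheory GRing.Theory Num.Theory.
Local Open Scope classical_set_scope.
Local Open Scope ring_scope.

Section Aux.
Variable R : realType.
Definition muo : set R -> \bar R := ((@wlength R idfun)^*)%mu.
Definition shiftS (S : set R) (c : R) : set R := [set x | S (x - c)].

Lemma shift_itv (a b c : R) :
  shiftS `]a, b]%classic c = `]a + c, b + c]%classic.
Proof.
rewrite /shiftS; apply/seteqP; split => x /=; rewrite !in_itv /=.
  by rewrite ltrBrDr lerBlDr.
by rewrite ltrBrDr lerBlDr.
Qed.

Lemma muo_shift_le S c : (muo (shiftS S c) <= muo S)%E.
Proof.
rewrite /muo /mu_ext; apply: le_ereal_inf_tmp => x [F [mF cov] <-].
apply: ereal_inf_lbound.
exists (fun k => shiftS (F k) c).
  split.
    move=> k; have [[a b] _ Fk] := mF k.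
    by rewrite -Fk /= shift_itv; exists (a + c, b + c).
  move=> y Sy; have [k _ Fk] := cov _ Sy.
  by exists k.
apply: eq_eseriesr => k _.
have [[a b] _ Fk] := mF k.
rewrite -Fk /= shift_itv.
rewrite (wlength_itv idfun (Interval (BRight (a + c)) (BRight (b + c)))).
rewrite (wlength_itv idfun (Interval (BRight a) (BRight b))) /=.
rewrite !lte_fin ltrD2r; case: ifP => //= _.
by rewrite -!EFinB; congr EFin; rewrite opprD addrACA subrr addr0.
Qed.

Lemma shiftSK S c : shiftS (shiftS S c) (- c) = S.
Proof. by rewrite /shiftS; apply/seteqP; split => x /=; rewrite opprK addrK. Qed.

Lemma shiftSKN S c : shiftS (shiftS S (- c)) c = S.
Proof. by rewrite /shiftS; apply/seteqP; split => x /=; rewrite opprK subrK. Qed.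

Lemma muo_shift S c : muo (shiftS S c) = muo S.
Proof.
apply/le_anti; rewrite muo_shift_le /=.
by rewrite -{1}(shiftSK S c) muo_shift_le.
Qed.

Lemma shiftI S T c : shiftS (S `&` T) c = shiftS S c `&` shiftS T c.
Proof. by []. Qed.
Lemma shiftC S c : shiftS (~` S) c = ~` shiftS S c.
Proof. by []. Qed.

Lemma LmeasE S : Lmeas S = caratheodory_measurable muo S.
Proof. by []. Qed.

Lemma Lmeas_shift S c : Lmeas S -> Lmeas (shiftS S c).
Proof.
rewrite !LmeasE => mS X.
rewrite -(muo_shift X (- c)).
have -> : X `&` shiftS S c = shiftS (shiftS X (- c) `&` S) c.
  by rewrite shiftI shiftSKN.
have -> : X `&` ~` shiftS S c = shiftS (shiftS X (- c) `&` ~` S) c.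
  by rewrite shiftI shiftSKN.
rewrite !(muo_shift _ c).
exact: mS.
Qed.

Lemma Lmeas_borel (S : set R) : measurable (S : set (measurableTypeR R)) -> Lmeas S.
Proof. move=> mS; exact: sub_caratheodory. Qed.

Lemma muo_itv (i : interval R) : muo [set` i] =
  (if (i.1 < i.2)%E then ((i.2 : \bar R) - i.1)%E else 0%E).
Proof. exact: (lebesgue_measure_itv i). Qed.

Lemma haarE S : haar S = muo (S `&` @fund R).
Proof. by []. Qed.

Lemma muo_fund : muo (@fund R) = 1%E.
Proof. by rewrite /fund muo_itv /= lte_fin ltr01 sube0. Qed.

Lemma muo_02 : muo `[0%R, 2%R[%classic = 2%:E.
Proof. by rewrite muo_itv /= lte_fin ltr0n sube0. Qed.

Lemma Lmeas_fund : Lmeas (@fund R).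
Proof. apply: Lmeas_borel; exact: measurable_itv. Qed.

Lemma tper_nat (S : set R) : tper S -> forall (n : nat) x, S (x + n%:R) <-> S x.
Proof.
move=> hS; elim=> [|n IH] x; first by rewrite addr0.
by rewrite -natr1 addrA hS IH.
Qed.

Lemma tper_int (S : set R) : tper S -> forall (z : int) x, S (x + z%:~R) <-> S x.
Proof.
move=> hS [n|n] x; first exact: tper_nat.
rewrite NegzE mulrNz.
have := @tper_nat S hS n.+1 (x + - (n.+1%:~R)).
rewrite (_ : n.+1%:~R = n.+1%:R :> R) // subrK => H.
by split => [/H|/H].
Qed.

Lemma arch0 (r : R) : (forall n : nat, r * n.+1%:R <= 2) -> r <= 0.
Proof.
move=> h; rewrite leNgt; apply/negP => r0.
have b0 : 0 <= 2 / r by rewrite divr_ge0 // ltW.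
have := archi_boundP b0; set N := Num.Def.archi_bound _ => hN.
have := h N; rewrite leNgt => /negP; apply.
rewrite (lt_le_trans (_ : _ < r * N%:R)) //.
  by rewrite mulrC -ltr_pdivrMr.
by rewrite ler_wpM2l ?ltW // ?ltr_nat ?ler_nat.
Qed.

Definition isQ (x : R) : Prop := exists q : rat, x = ratr q.
Lemma isQD x y : isQ x -> isQ y -> isQ (x + y).
Proof. by move=> [p ->] [q ->]; exists (p + q); rewrite rmorphD. Qed.
Arguments isQD {x y}.
Lemma isQN x : isQ x -> isQ (- x).
Proof. by move=> [p ->]; exists (- p); rewrite rmorphN. Qed.
Arguments isQN {x}.
Lemma isQ0 : isQ 0.
Proof. by exists 0; rewrite rmorph0. Qed.
Lemma isQ1 : isQ 1.
Proof. by exists 1; rewrite rmorph1. Qed.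

Definition cls (x : R) : set R := [set y | isQ (y - x)].
Definition rep (x : R) : R := xget 0 (cls x).

Lemma rep_cls x : isQ (rep x - x).
Proof. by apply: (@xgetPex _ 0 (cls x)); exists x; rewrite /cls /= subrr; exact: isQ0. Qed.

Lemma rep_eq x y : isQ (x - y) -> rep x = rep y.
Proof.
move=> hxy; rewrite /rep; congr xget.
apply/seteqP; split => z /=.
  by move=> h; have := isQD h hxy; rewrite addrA subrK.
by move=> h; have := isQD h (isQN hxy); rewrite opprB addrA subrK.
Qed.

Definition Avit : set R := [set x | exists z : int, x - rep x = z%:~R].

Lemma Avit_per : tper Avit.
Proof.
move=> x; rewrite /Avit /= (@rep_eq (x + 1) x); last by rewrite addrAC subrr add0r; exact: isQ1.
split => -[z hz].
  by exists (z - 1); rewrite rmorphB /= -hz addrAC addrK.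
by exists (z + 1); rewrite rmorphD /= -hz addrAC.
Qed.

Lemma Avit_rep x : Avit (rep x).
Proof. by exists 0; rewrite (@rep_eq (rep x) x (rep_cls x)) subrr. Qed.

Lemma Avit_diff x y : Avit x -> Avit y -> isQ (x - y) -> exists z : int, x - y = z%:~R.
Proof.
move=> [a ha] [b hb] /rep_eq e; exists (a - b).
by rewrite rmorphB /= -ha -hb e opprB addrA subrK.
Qed.

Arguments Avit_diff {x y}.
Lemma muo_le (S T : set R) : S `<=` T -> (muo S <= muo T)%E.
Proof. exact: (le_outer_measure ((@wlength R idfun)^*)%mu). Qed.

Lemma muo_ge0 (S : set R) : (0 <= muo S)%E.
Proof. exact: (outer_measure_ge0 ((@wlength R idfun)^*)%mu). Qed.

Lemma isQ_invn (n : nat) : isQ (n%:R^-1).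
Proof. by exists (n%:R^-1); rewrite fmorphV rmorph_nat. Qed.

Lemma int_small (z : int) : -1 < z%:~R :> R -> z%:~R < 1 :> R -> z = 0.
Proof.
rewrite -(mulrN1z 1) (_ : (1 : R) = 1%:~R) // !ltr_int.
by case: z => [[|n]|n] //.
Qed.

Lemma inner0 (K : set R) : closed (K : set R^o) -> K `<=` Avit ->
  muo (K `&` @fund R) = 0%E.
Proof.
move=> cK KA; set K0 := K `&` @fund R.
have mK0 : Lmeas K0.
  apply: Lmeas_borel; apply: measurableI; last exact: measurable_itv.
  exact: closed_measurable.
pose c (k : nat) : R := k.+1%:R^-1.
have c0 k : 0 < c k by rewrite invr_gt0 ltr0n.
have c1 k : c k <= 1 by rewrite invf_le1 ?ler1n ?ltr0n.
pose F k := shiftS K0 (c k).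
have mF k : Lmeas (F k) by exact: Lmeas_shift.
have tF : trivIset setT F.
  move=> i j _ _ [x [[Ki fi] [Kj fj]]].
  move: fi fj; rewrite /fund /= !in_itv /= => /andP[i0 i1] /andP[j0 j1].
  have hq : isQ ((x - c i) - (x - c j)).
    have -> : (x - c i) - (x - c j) = c j + - c i by ring.
    apply: isQD; first exact: isQ_invn.
    apply: isQN; exact: isQ_invn.
  have [z hz] := Avit_diff (KA _ Ki) (KA _ Kj) hq.
  have z0 : z = 0.
    apply: int_small; rewrite -hz.
      by lra.
    by lra.
  have : c i = c j by move: hz; rewrite z0 /=; lra.
  by move/invr_inj/eqP; rewrite eqr_nat => /eqP[].
have hsum n : (\sum_(i < n) muo (F i) <= 2%:E)%E.
  have := measure_bigsetU (@completed_lebesgue_measure R) mF tF n.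
  move=> <-; rewrite -muo_02; apply: muo_le.
  apply: (big_ind (fun S : set R => S `<=` `[0%R, 2%R[%classic)) => //.
    by move=> S T hS hT x [/hS|/hT].
  move=> i _ x [_]; rewrite /fund /= !in_itv /= => /andP[h1 h2].
  have := c0 i; have := c1 i => ha hb.
  apply/andP; split; lra.
have K01 : (muo K0 <= 1)%E by rewrite -muo_fund; apply: muo_le; exact: subIsetr.
have finK : muo K0 \is a fin_num by rewrite ge0_fin_numE ?muo_ge0 // (le_lt_trans K01) // ltry.
have hsum' n : (muo K0 *+ n <= 2%:E)%E.
  have := hsum n; under eq_bigr do rewrite /F muo_shift.
  by rewrite sumr_const card_ord.
move: (muo_ge0 K0) finK hsum'; case: (muo K0) => [a| |] //= a0 _ h.
rewrite lee_fin in a0; congr EFin; apply/le_anti; rewrite a0 andbT; apply: arch0 => n.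
by have := h n.+1; rewrite -EFin_natmul lee_fin mulr_natr.
Qed.

Lemma outer_null (U : set R) : tper U -> Avit `<=` U ->
  muo (U `&` @fund R) = 0%E -> False.
Proof.
move=> pU AU U0; set V := U `&` @fund R.
pose t n : R := ratr (odflt 0 (unpickle n : option rat)).
have cov : @fund R `<=` \bigcup_n shiftS V (t n).
  move=> x fx; have [q hq] := rep_cls x.
  set z := Num.floor (rep x).
  exists (pickle (z%:~R - q : rat)) => //.
  rewrite /shiftS /t pickleK /= rmorphB rmorph_int /=.
  have -> : x - (z%:~R - ratr q) = rep x + (- z)%:~R by rewrite -hq rmorphN; ring.
  split.
    by apply/(@tper_int U pU); apply: AU; exact: Avit_rep.
  rewrite /fund /= in_itv /= rmorphN; apply/andP; split.
    by rewrite subr_ge0 floor_le.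
  have := floorD1_gt (rep x); rewrite -/z intrD; lra.
have : (muo (@fund R) <= \sum_(0 <= i <oo) muo (shiftS V (t i)))%E.
  exact: (le_trans (muo_le _ _ cov) (outer_measure_sigma_subadditive ((@wlength R idfun)^*)%mu (fun n => shiftS V (t n)))).
under eq_eseriesr do rewrite (muo_shift V _) U0.
by rewrite eseries0 // muo_fund lee_fin ler10.
Qed.

Lemma Lmeas_setT_fund : haar_measurable (@setT R).
Proof. by rewrite /haar_measurable setTI; exact: Lmeas_fund. Qed.

Lemma haar_setT : haar (@setT R) = 1%E.
Proof. by rewrite haarE setTI muo_fund. Qed.

Lemma outer_le1 : (haar_outer Avit <= 1)%E.
Proof.
rewrite -haar_setT; apply: ereal_inf_lbound; exists setT => //.
split; first by move=> x. by split; [exact: Lmeas_setT_fund|].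
Qed.

Lemma outer_ge0 : (0 <= haar_outer Avit)%E.
Proof. by apply: le_ereal_inf_tmp => _ [U _ <-]; rewrite haarE muo_ge0. Qed.

Lemma outer_pos : (0 < haar_outer Avit)%E.
Proof.
rewrite lt_neqAle outer_ge0 andbT; apply/negP => /eqP h0.
have fin : haar_outer Avit \is a fin_num.
  by rewrite ge0_fin_numE ?outer_ge0 // (le_lt_trans outer_le1) // ltry.
have ex k : exists U : set R, (tper U /\ haar_measurable U /\ Avit `<=` U) /\
    (haar U < (k.+1%:R^-1)%:E)%E.
  have e0 : (0 : R) < k.+1%:R^-1 by rewrite invr_gt0 ltr0n.
  have [_ [U hU <-]] := lb_ereal_inf_adherent e0 fin.
  by rewrite -/(haar_outer Avit) -h0 add0e => hl; exists U.
pose Uk k := proj1_sig (cid (ex k)).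
have hUk k : (tper (Uk k) /\ haar_measurable (Uk k) /\ Avit `<=` Uk k) /\
    (haar (Uk k) < (k.+1%:R^-1)%:E)%E by rewrite /Uk; case: cid.
pose U := \bigcap_k Uk k.
apply: (@outer_null U).
- move=> x; split => h k _; have [[pk _] _] := hUk k.
    by apply/pk; exact: h.
  by apply/pk; exact: h.
- by move=> x Ax k _; have [[_ [_ sk]] _] := hUk k; exact: sk.
have hle k : (muo (U `&` @fund R) <= (k.+1%:R^-1)%:E)%E.
  have [_ hk] := hUk k; apply: le_trans (ltW hk); rewrite haarE.
  by apply: muo_le; apply: setSI; exact: bigcap_inf.
move: (muo_ge0 (U `&` @fund R)) hle; case: (muo _) => [a| |] //= a0 h.
  rewrite lee_fin in a0; congr EFin; apply/le_anti; rewrite a0 andbT.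
  apply: arch0 => n; have := h n; rewrite lee_fin => hn.
  rewrite -(@ler_pM2r _ (n.+1%:R^-1)) ?invr_gt0 ?ltr0n //.
  rewrite -mulrA mulfV ?pnatr_eq0 // mulr1 (le_trans hn) //.
  have : 0 <= n.+1%:R^-1 :> R by rewrite invr_ge0 ler0n.
  by move=> hpos; rewrite -[X in X <= _]mul1r; apply: ler_wpM2r => //; rewrite ler1n.
by have := h 0%N; rewrite leNgt ltry.
Qed.

Lemma inner_le0 : (haar_inner Avit <= 0)%E.
Proof.
apply: ge_ereal_sup => _ [K [_ [cK KA]] <-].
by rewrite haarE inner0.
Qed.

Lemma sumsetT (X : set R) x0 : X x0 -> sumset X setT = setT.
Proof.
move=> Xx; apply/seteqP; split => // y _.
by exists x0 => //; exists (y - x0) => //; rewrite addrC subrK.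
Qed.

Lemma msum0 n : Defs.msum (@setT R) n 0.
Proof. by elim: n => [|n IH] //=; exists 0 => //; exists 0 => //; rewrite addr0. Qed.

Lemma msumT n : Defs.msum (@setT R) n.+1 = setT.
Proof. by rewrite /= (@sumsetT _ 0 (msum0 n)). Qed.

Lemma negsetT : negset (@setT R) = setT.
Proof.
apply/seteqP; split => // y _; by exists (- y) => //; rewrite opprK.
Qed.

Lemma diffsetT m n : (0 < n)%N -> diffset (@setT R) m n = setT.
Proof.
by case: n => // n _; rewrite /diffset msumT negsetT (@sumsetT _ 0 (msum0 m)).
Qed.
End Aux.

Theorem proposition5p5 (R : realType) :
  exists (A B : set R) (alpha : R),
    [/\ tper A /\ tper B, 0 < alpha,
     haar_measurable (sumset A B),
     (0 < haar (sumset A B) <= alpha%:E * haar_outer A)%E &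
     forall m n : nat, (0 < m)%N -> (0 < n)%N ->
       haar_measurable (diffset B m n) /\
       ((alpha ^+ (m + n))%:E * haar_inner A < haar (diffset B m n))%E].
Proof.
have fin : haar_outer (Avit R) \is a fin_num.
  by rewrite ge0_fin_numE ?outer_ge0 // (le_lt_trans (outer_le1 R)) // ltry.
set r := fine (haar_outer (Avit R)).
have hr : haar_outer (Avit R) = r%:E by rewrite fineK.
have r0 : 0 < r by rewrite -lte_fin -hr outer_pos.
have AT : sumset (Avit R) setT = setT := @sumsetT R _ _ (Avit_rep R 0).
exists (Avit R), setT, r^-1; split.
- by split; [exact: Avit_per | move=> x].
- by rewrite invr_gt0.
- by rewrite AT; exact: Lmeas_setT_fund.
- by rewrite AT haar_setT hr -EFinM mulVf ?gt_eqF // lte01 lexx.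
move=> m n _ n0; rewrite diffsetT //; split; first exact: Lmeas_setT_fund.
rewrite haar_setT; apply: (le_lt_trans _ (@lte01 R)).
apply: mule_ge0_le0; last exact: inner_le0.
by rewrite lee_fin exprn_ge0 // invr_ge0 ltW.
Qed.
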